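(* A tree share $\tau\in\mathbb{T}$ is unary if and only if $$\tau\neq\circ\ \wedge\ \forall\tau'\in\mathbb{T}.\ \big(\tau'\bowtie\mathcal{L}\sqsubset\tau\ \leftrightarrow\ \tau'\bowtie\mathcal{R}\sqsubset\tau\big).$$
   Context: A tree share is a finite binary tree whose leaves are labelled $\bullet$ (black) or $\circ$ (white), in canonical form: no subtree has the form $\mathrm{Node}(\bullet,\bullet)$ or $\mathrm{Node}(\circ,\circ)$ (such subtrees are identified with the leaf $\bullet$, resp. $\circ$). $\mathbb{T}$ denotes the set of tree shares. $\tau_1\sqcup\tau_2$ is computed by unfolding both trees (replacing a leaf $\ell$ by $\mathrm{Node}(\ell,\ell)$ as needed) to a common shape, taking Boolean join leafwise ($\bullet$ = true, $\circ$ = false), and refolding to canonical form. $\tau_1\sqsubset\tau_2$ means $\tau_1\sqcup\tau_2=\tau_2$ and $\tau_1\neq\tau_2$. The product $\tau_1\bowtie\tau_2$ is obtained by replacing every $\bullet$ leaf of $\tau_1$ by a copy of $\tau_2$ and refolding to canonical form. $\mathcal{L}=\mathrm{Node}(\bullet,\circ)$, $\mathcal{R}=\mathrm{Node}(\circ,\bullet)$. A unary tree is a tree share with exactly one black leaf. *)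

(* Defs.v *)
(* Tree shares as canonical finite binary trees with boolean leaves
   (true = black bullet, false = white circle). *)
From Stdlib Require Import Bool.

Inductive tree : Type :=
| Leaf (b : bool)
| Node (l r : tree).

Definition black : tree := Leaf true.
Definition white : tree := Leaf false.

Fixpoint canonical (t : tree) : bool :=
  match t with
  | Leaf _ => true
  | Node (Leaf a) (Leaf b) => negb (Bool.eqb a b)
  | Node l r => canonical l && canonical r
  end.

(* one refolding step: Node(b,b) is identified with the leaf b *)
Definition mkNode (l r : tree) : tree :=
  match l, r with
  | Leaf a, Leaf b => if Bool.eqb a b then Leaf a else Node l r
  | _, _ => Node l r
  end.

(* join: unfold a leaf x to Node(x,x) as needed to reach a common shape,
   take boolean or leafwise, refold bottom-up *)
Fixpoint join (t1 : tree) : tree -> tree :=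
  fix joinA (t2 : tree) : tree :=
  match t1, t2 with
  | Leaf a, Leaf b => Leaf (a || b)
  | Leaf a, Node l2 r2 => mkNode (joinA l2) (joinA r2)
  | Node l1 r1, Leaf b => mkNode (join l1 (Leaf b)) (join r1 (Leaf b))
  | Node l1 r1, Node l2 r2 => mkNode (join l1 l2) (join r1 r2)
  end.

Definition share_lt (t1 t2 : tree) : Prop := join t1 t2 = t2 /\ t1 <> t2.

Fixpoint bowtie (t1 t2 : tree) : tree :=
  match t1 with
  | Leaf true => t2
  | Leaf false => Leaf false
  | Node l r => mkNode (bowtie l t2) (bowtie r t2)
  end.

Definition L_share : tree := Node black white.
Definition R_share : tree := Node white black.

Fixpoint black_leaves (t : tree) : nat :=
  match t with
  | Leaf true => 1
  | Leaf false => 0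
  | Node l r => black_leaves l + black_leaves r
  end.

Definition unary (t : tree) : Prop := black_leaves t = 1.

(* Main.v *)
Require Import Defs.
From Stdlib Require Import Bool Lia.

Lemma mkNode_eq_Node X Y c d : mkNode X Y = Node c d -> X = c /\ Y = d.
Proof.
  destruct X, Y; simpl; try (destruct (Bool.eqb _ _)); intro H; inversion H; auto.
Qed.

Lemma mkNode_neq X Y : X <> Y -> mkNode X Y = Node X Y.
Proof.
  destruct X, Y; simpl; auto.
  intro H. destruct (Bool.eqb b b0) eqn:E; auto.
  apply eqb_prop in E. subst. congruence.
Qed.

Lemma canon_Node_eq l r : canonical (Node l r) =
  match l, r with Leaf a, Leaf b => negb (Bool.eqb a b) | _, _ => canonical l && canonical r end.
Proof. destruct l, r; reflexivity. Qed.

Lemma canon_Node l r : canonical (Node l r) = true -> canonical l = true /\ canonical r = true.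
Proof.
  rewrite canon_Node_eq. destruct l, r; intro H; auto; apply andb_true_iff in H; tauto.
Qed.



Lemma canon_Node_intro l r : canonical l = true -> canonical r = true -> l <> r ->
  canonical (Node l r) = true.
Proof.
  intros H1 H2 H3. rewrite canon_Node_eq.
  destruct l, r; rewrite ?H1, ?H2; auto.
  destruct b, b0; simpl; auto; congruence.
Qed.

Lemma mkNode_canon l r : canonical (Node l r) = true -> mkNode l r = Node l r.
Proof.
  destruct l, r; simpl; auto. intro H. destruct (Bool.eqb b b0); simpl in H; auto; discriminate.
Qed.

Lemma canon_mkNode l r : canonical l = true -> canonical r = true -> canonical (mkNode l r) = true.
Proof.
  intros H1 H2. destruct l, r.
  - simpl. destruct (Bool.eqb b b0) eqn:E; auto. rewrite canon_Node_eq, E. auto.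
  - change (canonical (Node (Leaf b) (Node r1 r2)) = true). rewrite canon_Node_eq, H1, H2; auto.
  - change (canonical (Node (Node l1 l2) (Leaf b)) = true). rewrite canon_Node_eq, H1, H2; auto.
  - change (canonical (Node (Node l1 l2) (Node r1 r2)) = true). rewrite canon_Node_eq, H1, H2; auto.
Qed.

Lemma canon_bowtie t1 t2 : canonical t2 = true -> canonical (bowtie t1 t2) = true.
Proof.
  intro H. induction t1 as [b|l IHl r IHr]; simpl.
  - destruct b; auto.
  - apply canon_mkNode; auto.
Qed.

Lemma join_mkNode_Node A B c d : join (mkNode A B) (Node c d) = mkNode (join A c) (join B d).
Proof.
  destruct A, B; simpl; auto. destruct (Bool.eqb b b0) eqn:E; simpl; auto.
  apply eqb_prop in E; subst; auto.
Qed.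

Lemma join_t_white t : canonical t = true -> join t white = t.
Proof.
  induction t as [b|l IHl r IHr]; intro H.
  - simpl. rewrite orb_false_r; auto.
  - destruct (canon_Node _ _ H). change (mkNode (join l white) (join r white) = Node l r).
    rewrite IHl, IHr; auto. apply mkNode_canon; auto.
Qed.

Lemma join_white_t t : canonical t = true -> join white t = t.
Proof.
  induction t as [b|l IHl r IHr]; intro H.
  - simpl. auto.
  - destruct (canon_Node _ _ H). change (mkNode (join white l) (join white r) = Node l r).
    rewrite IHl, IHr; auto. apply mkNode_canon; auto.
Qed.

Lemma join_t_black t : join t black = black.
Proof.
  induction t as [b|l IHl r IHr].
  - simpl. rewrite orb_true_r; auto.
  - change (mkNode (join l black) (join r black) = black). rewrite IHl, IHr. reflexivity.
Qed.

Lemma join_black_t t : join black t = black.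
Proof.
  induction t as [b|l IHl r IHr].
  - reflexivity.
  - change (mkNode (join black l) (join black r) = black). rewrite IHl, IHr. reflexivity.
Qed.

Lemma mkNode_leaf l r a : mkNode l r = Leaf a -> l = Leaf a /\ r = Leaf a.
Proof.
  destruct l, r; simpl; try discriminate.
  destruct (Bool.eqb b b0) eqn:E; intro H; inversion H; subst.
  apply eqb_prop in E; subst; auto.
Qed.

Lemma bowtie_white b X : canonical b = true -> X <> white -> bowtie b X = white -> b = white.
Proof.
  induction b as [c|l IHl r IHr]; intros H HX E.
  - destruct c; simpl in E; unfold black, white in *; congruence.
  - destruct (canon_Node _ _ H). simpl in E. apply mkNode_leaf in E as [E1 E2].
    apply IHl in E1; auto. apply IHr in E2; auto. subst. discriminate.
Qed.

Lemma bowtie_black b X : X <> black -> bowtie b X <> black.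
Proof.
  induction b as [c|l IHl r IHr]; intros HX E.
  - destruct c; simpl in E; unfold black, white in *; congruence.
  - simpl in E. apply mkNode_leaf in E as [E1 E2]. apply (IHl HX E1).
Qed.

Lemma zero_white t : canonical t = true -> black_leaves t = 0 -> t = white.
Proof.
  induction t as [c|l IHl r IHr]; intros H E.
  - destruct c; simpl in E; unfold black, white in *; congruence.
  - destruct (canon_Node _ _ H). simpl in E.
    assert (l = white) by (apply IHl; auto; lia).
    assert (r = white) by (apply IHr; auto; lia). subst. discriminate.
Qed.

Lemma ltA A B l : canonical A = true -> canonical B = true -> canonical l = true -> l <> white ->
  (share_lt (mkNode A B) (Node l white) <-> B = white /\ share_lt A l).
Proof.
  intros HA HB Hl Hw. unfold share_lt.
  rewrite join_mkNode_Node, join_t_white by auto. split.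
  - intros [E N]. apply mkNode_eq_Node in E as [E1 E2]. subst B. split; auto. split; auto.
    intro; subst. apply N. apply mkNode_neq. auto.
  - intros [E [E1 N]]. subst. rewrite E1. split.
    + apply mkNode_neq; auto.
    + intro E. apply mkNode_eq_Node in E as [E _]. auto.
Qed.

Lemma ltA' A B r : canonical A = true -> canonical B = true -> canonical r = true -> r <> white ->
  (share_lt (mkNode A B) (Node white r) <-> A = white /\ share_lt B r).
Proof.
  intros HA HB Hl Hw. unfold share_lt.
  rewrite join_mkNode_Node, join_t_white by auto. split.
  - intros [E N]. apply mkNode_eq_Node in E as [E1 E2]. subst A. split; auto. split; auto.
    intro; subst. apply N. apply mkNode_neq. auto.
  - intros [E [E1 N]]. subst. rewrite E1. split.
    + apply mkNode_neq; auto.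
    + intro E. apply mkNode_eq_Node in E as [_ E]. auto.
Qed.

Lemma C0 A l r : canonical (Node l r) = true ->
  (join (mkNode A white) (Node l r) = Node l r <-> join A l = l).
Proof.
  intro H. destruct (canon_Node _ _ H).
  rewrite join_mkNode_Node, join_white_t by auto. split.
  - intro E. apply mkNode_eq_Node in E; tauto.
  - intro E. rewrite E. apply mkNode_canon; auto.
Qed.

Lemma C0' B l r : canonical (Node l r) = true ->
  (join (mkNode white B) (Node l r) = Node l r <-> join B r = r).
Proof.
  intro H. destruct (canon_Node _ _ H).
  rewrite join_mkNode_Node, join_white_t by auto. split.
  - intro E. apply mkNode_eq_Node in E; tauto.
  - intro E. rewrite E. apply mkNode_canon; auto.
Qed.

Lemma C1 A l r : canonical (Node l r) = true -> r <> white ->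
  (share_lt (mkNode A white) (Node l r) <-> join A l = l).
Proof.
  intros H Hr. unfold share_lt. rewrite C0 by auto. split; [tauto|].
  intro E; split; auto. intro E'. apply mkNode_eq_Node in E' as [_ E']. auto.
Qed.

Lemma L_ne_white : L_share <> white. Proof. discriminate. Qed.
Lemma R_ne_white : R_share <> white. Proof. discriminate. Qed.
Lemma L_canon : canonical L_share = true. Proof. reflexivity. Qed.
Lemma R_canon : canonical R_share = true. Proof. reflexivity. Qed.

Lemma bw_white_iff b X : canonical b = true -> X <> white -> (bowtie b X = white <-> b = white).
Proof.
  intros H HX. split.
  - apply bowtie_white; auto.
  - intros; subst; reflexivity.
Qed.

Lemma forward tau : canonical tau = true -> unary tau ->
  forall tau', canonical tau' = true ->
    (share_lt (bowtie tau' L_share) tau <-> share_lt (bowtie tau' R_share) tau).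
Proof.
  unfold unary. induction tau as [c|l IHl r IHr]; intros H U t Ht.
  - destruct c; [|discriminate]. unfold share_lt. rewrite !join_t_black.
    pose proof (bowtie_black t L_share ltac:(discriminate)).
    pose proof (bowtie_black t R_share ltac:(discriminate)). tauto.
  - destruct (canon_Node _ _ H) as [Hl Hr]. simpl in U.
    assert ((black_leaves l = 1 /\ black_leaves r = 0) \/ (black_leaves l = 0 /\ black_leaves r = 1))
      as [[U1 U2]|[U1 U2]] by lia.
    + apply zero_white in U2; auto. subst r.
      assert (lw : l <> white) by (intro; subst; discriminate).
      destruct t as [c|a b].
      * destruct c; [|reflexivity]. simpl. unfold share_lt. split; intros [E N]; exfalso.
        -- change (mkNode (join black l) (join white white) = Node l white) in E.
           rewrite join_black_t in E. apply mkNode_eq_Node in E as [E _]. subst. auto.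
        -- change (mkNode (join white l) (join black white) = Node l white) in E.
           apply mkNode_eq_Node in E as [_ E]. discriminate.
      * destruct (canon_Node _ _ Ht) as [Ha Hb]. simpl.
        rewrite !ltA by (auto using canon_bowtie).
        rewrite !bw_white_iff by (auto; discriminate).
        rewrite (IHl Hl U1 a Ha). tauto.
    + apply zero_white in U1; auto. subst l.
      assert (rw : r <> white) by (intro; subst; discriminate).
      destruct t as [c|a b].
      * destruct c; [|reflexivity]. simpl. unfold share_lt. split; intros [E N]; exfalso.
        -- change (mkNode (join black white) (join white r) = Node white r) in E.
           apply mkNode_eq_Node in E as [E _]. discriminate.
        -- change (mkNode (join white white) (join black r) = Node white r) in E.
           rewrite join_black_t in E. apply mkNode_eq_Node in E as [_ E]. subst. auto.
      * destruct (canon_Node _ _ Ht) as [Ha Hb]. simpl.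
        rewrite !ltA' by (auto using canon_bowtie).
        rewrite !bw_white_iff by (auto; discriminate).
        rewrite (IHr Hr U2 b Hb). tauto.
Qed.

Lemma tree_eq_white t : {t = white} + {t <> white}.
Proof. destruct t as [[|]|l r]; [right|left|right]; try reflexivity; discriminate. Qed.

Lemma join_NN a b c d : join (Node a b) (Node c d) = mkNode (join a c) (join b d).
Proof. reflexivity. Qed.

Lemma bowtie_Node l r X : bowtie (Node l r) X = mkNode (bowtie l X) (bowtie r X).
Proof. reflexivity. Qed.
Lemma bowtie_wl X : bowtie white X = white.
Proof. reflexivity. Qed.

Lemma NS l : canonical l = true -> (exists x y, l = Node x y) ->
  exists a, canonical a = true /\ ~(join (bowtie a L_share) l = l <-> join (bowtie a R_share) l = l).
Proof.
  induction l as [c|x IHx y IHy]; intros H [x0 [y0 E]]; [discriminate|clear x0 y0 E].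
  destruct (canon_Node _ _ H) as [Hx Hy].
  destruct x as [[|]|x1 x2].
  - exists black. split; [reflexivity|]. simpl bowtie.
    unfold L_share, R_share. rewrite !join_NN.
    rewrite (join_white_t y Hy), !join_black_t, (join_white_t (Leaf true)) by reflexivity.
    rewrite (mkNode_canon black y H).
    intros [E _]. specialize (E eq_refl). simpl in E. discriminate.
  - destruct y as [[|]|y1 y2].
    + exists black. split; [reflexivity|]. simpl. intros [_ E]. specialize (E eq_refl). discriminate.
    + discriminate.
    + destruct (IHy Hy ltac:(eauto)) as [a [Ha N]].
      assert (aw : a <> white) by (intro; subst; apply N; simpl; tauto).
      exists (Node white a). split.
      * apply canon_Node_intro; auto.
      * rewrite !bowtie_Node, !bowtie_wl. rewrite !C0' by auto. exact N.
  - destruct (IHx Hx ltac:(eauto)) as [a [Ha N]].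
    assert (aw : a <> white) by (intro; subst; apply N; simpl; tauto).
    exists (Node a white). split.
    * apply canon_Node_intro; auto.
    * rewrite !bowtie_Node, !bowtie_wl. rewrite !C0 by auto. exact N.
Qed.

Lemma backward tau : canonical tau = true -> tau <> white -> black_leaves tau <> 1 ->
  exists t, canonical t = true /\
    ~(share_lt (bowtie t L_share) tau <-> share_lt (bowtie t R_share) tau).
Proof.
  induction tau as [c|l IHl r IHr]; intros H Hw Hb.
  - destruct c; simpl in Hb; [congruence|]. exfalso; apply Hw; reflexivity.
  - destruct (canon_Node _ _ H) as [Hl Hr].
    destruct (tree_eq_white l) as [->|lw].
    + assert (rw : r <> white) by (intro; subst; discriminate).
      destruct (IHr Hr rw ltac:(simpl in Hb; lia)) as [a [Ha N]].
      assert (aw : a <> white) by (intro; subst; apply N; simpl; tauto).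
      exists (Node white a). split.
      * apply canon_Node_intro; auto.
      * rewrite !bowtie_Node, !bowtie_wl. rewrite !ltA' by (auto using canon_bowtie). intros E; apply N.
        split; intro; apply E; auto.
    + destruct (tree_eq_white r) as [->|rw].
      * destruct (IHl Hl lw ltac:(simpl in Hb; lia)) as [a [Ha N]].
        assert (aw : a <> white) by (intro; subst; apply N; simpl; tauto).
        exists (Node a white). split.
        -- apply canon_Node_intro; auto.
        -- rewrite !bowtie_Node, !bowtie_wl. rewrite !ltA by (auto using canon_bowtie; reflexivity). intros E; apply N.
           split; intro; apply E; auto.
      * destruct l as [[|]|l1 l2].
        -- exists black. split; [reflexivity|]. simpl bowtie. unfold share_lt.
           unfold L_share, R_share. rewrite !join_NN.
           rewrite (join_white_t r Hr), !join_black_t, (join_white_t (Leaf true)) by reflexivity.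
           rewrite (mkNode_canon black r H).
           intros [E _]. destruct E as [E1 _].
           ++ split; auto. intro E'. inversion E'. subst. apply rw; reflexivity.
           ++ simpl in E1. discriminate.
        -- exfalso; apply lw; reflexivity.
        -- destruct (NS (Node l1 l2) Hl ltac:(eauto)) as [a [Ha N]].
           assert (aw : a <> white) by (intro; subst; apply N; simpl; tauto).
           exists (Node a white). split.
           ++ apply canon_Node_intro; auto.
           ++ rewrite !bowtie_Node, !bowtie_wl. rewrite !C1 by auto. exact N.
Qed.

Theorem lemma4 (tau : tree) (Htau : canonical tau = true) :
  unary tau <->
  (tau <> white /\
   forall tau' : tree, canonical tau' = true ->
     (share_lt (bowtie tau' L_share) tau <-> share_lt (bowtie tau' R_share) tau)).
Proof.
  split.
  - intro U. split.
    + intro; subst; discriminate.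
    + apply forward; auto.
  - intros [Hw P]. unfold unary.
    destruct (PeanoNat.Nat.eq_dec (black_leaves tau) 1) as [e|ne]; auto.
    destruct (backward tau Htau Hw ne) as [t [Ht N]]. exfalso. apply N, P, Ht.
Qed.
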